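(* Let $h>0$ and $\mathcal{X}=(h,\infty)$. Let $\mathcal{L}:\mathcal{X}\to\mathbb{R}$ be real-analytic, bounded below and proper (coercive), with $\underline{\mathcal{L}}:=\inf_{k\in\mathcal{X}}\mathcal{L}(k)$, such that $\limsup_{k\to\infty}\mathcal{L}'(k)$ is finite and such that $\mathcal{L}$ satisfies a saturated Polyak–Łojasiewicz inequality: there exist $a,b>0$ with $$|\mathcal{L}'(k)|\ \ge\ \sqrt{\frac{a(\mathcal{L}(k)-\underline{\mathcal{L}})}{b+(\mathcal{L}(k)-\underline{\mathcal{L}})}}\qquad\text{for all }k\in\mathcal{X}.$$ Define $f(k):=\mathcal{L}(k^2)$ for $k>\sqrt{h}$, and $\underline{f}:=\inf_{k>\sqrt{h}}f(k)$ (so $\underline f=\underline{\mathcal{L}}$). Then for every $\epsilon>\sqrt{h}$ there exists $\mu_\epsilon>0$ such that $$|f'(k)|\ \ge\ \sqrt{\mu_\epsilon\,(f(k)-\underline{f})}\qquad\text{for all }k\in[\epsilon,\infty).$$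
   Context: ''Proper'' means coercive/radially unbounded on the open domain $\mathcal{X}$ (sublevel sets are compact in $\mathcal{X}$); since $\mathcal{L}$ is bounded below and proper, its infimum is attained. *)

(* Defs.v *)
From Stdlib Require Import Reals.
From Stdlib Require Import Rtopology.
From Coquelicot Require Import Coquelicot.
Open Scope R_scope.

Definition real_analytic_on_gt (h : R) (g : R -> R) : Prop :=
  forall x0, h < x0 ->
    exists (c : nat -> R) (r : R), 0 < r /\
      forall x, Rabs (x - x0) < r -> is_pseries c (x - x0) (g x).

Definition is_inf_on (P : R -> Prop) (g : R -> R) (m : R) : Prop :=
  (forall k, P k -> m <= g k) /\
  (forall e, 0 < e -> exists k, P k /\ g k < m + e).

(* Proper (coercive) on (h, +oo): every sublevel set {k > h | g k <= c}
   is compact (in R, equivalently in the open interval). *)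
Definition proper_on_gt (h : R) (g : R -> R) : Prop :=
  forall c, compact (fun k => h < k /\ g k <= c).

Definition limsup_pinfty_finite (g : R -> R) : Prop :=
  (exists M K, forall k, K < k -> g k <= M) /\
  (exists m, forall K, exists k, K < k /\ m <= g k).

(* Main.v *)
Require Import Defs.
From Stdlib Require Import Reals Lra.
From Coquelicot Require Import Coquelicot.
Open Scope R_scope.
From Stdlib Require Import Lra.

Lemma analytic_ex_derive h L : real_analytic_on_gt h L ->
  forall x0, h < x0 -> ex_derive L x0.
Proof.
  intros H x0 Hx0.
  destruct (H x0 Hx0) as (c & r & Hr & Hs).
  assert (Hy := Hs (x0 + r/2)).
  assert (Hp : is_pseries c (r/2) (L (x0 + r/2))).
  { replace (r/2) with (x0 + r/2 - x0) at 1 by ring. apply Hy.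
    replace (x0 + r/2 - x0) with (r/2) by ring. rewrite Rabs_pos_eq; lra. }
  assert (Hex : ex_pseries c (r/2)) by (eexists; exact Hp).
  apply ex_pseries_R in Hex.
  apply ex_series_lim_0 in Hex.
  destruct (filterlim_bounded (fun n => c n * (r/2)^n)) as [M HM].
  { exists 0. exact Hex. }
  assert (Hrad : Rbar_le (r/2) (CV_radius c)).
  { apply (proj1 (CV_radius_bounded c)). exists M. intro n. apply HM. }
  assert (Hrad0 : Rbar_lt (Rabs 0) (CV_radius c)).
  { rewrite Rabs_R0. eapply Rbar_lt_le_trans; [|exact Hrad]. simpl. lra. }
  assert (Hd := is_derive_PSeries c 0 Hrad0).
  apply ex_derive_ext_loc with (f := fun t => PSeries c (t - x0)).
  - exists (mkposreal r Hr). intros t Ht. apply is_pseries_unique. apply Hs. exact Ht.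
  - apply (ex_derive_comp (PSeries c) (fun t => t - x0)).
    + exists (PSeries (PS_derive c) 0). replace (x0 - x0) with 0 by ring. exact Hd.
    + auto_derive. auto.
Qed.
Lemma sq_gt h k : 0 < h -> sqrt h < k -> h < k ^ 2.
Proof.
  intros Hh Hk. pose proof (sqrt_pos h). pose proof (sqrt_sqrt h (Rlt_le _ _ Hh)). nra.
Qed.

Lemma deriv_sq (L : R -> R) k : ex_derive L (k^2) ->
  Derive (fun x => L (x ^ 2)) k = 2 * k * Derive L (k ^ 2).
Proof.
  intros HL. apply is_derive_unique.
  assert (H2 : is_derive (fun x : R => x ^ 2) k (2 * k)).
  { auto_derive; auto. ring. }
  pose proof (is_derive_comp L (fun x => x^2) k _ _ (Derive_correct _ _ HL) H2) as Hc.
  exact Hc.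
Qed.

Theorem theorem1 (h : R) (L : R -> R) (Linf finf a b : R) :
  0 < h ->
  real_analytic_on_gt h L ->
  (exists m, forall k, h < k -> m <= L k) ->
  proper_on_gt h L ->
  is_inf_on (fun k => h < k) L Linf ->
  limsup_pinfty_finite (fun k => Derive L k) ->
  0 < a -> 0 < b ->
  (forall k, h < k ->
     Rabs (Derive L k) >= sqrt (a * (L k - Linf) / (b + (L k - Linf)))) ->
  is_inf_on (fun k => sqrt h < k) (fun k => L (k ^ 2)) finf ->
  forall eps, sqrt h < eps ->
    exists mu, 0 < mu /\
      forall k, eps <= k ->
        Rabs (Derive (fun x => L (x ^ 2)) k) >= sqrt (mu * (L (k ^ 2) - finf)).
Proof.
  intros Hh Han _ _ Hinf Hlim Ha Hb HPL Hfinf eps Heps.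
  pose proof (sqrt_pos h) as Hsh.
  assert (Hex : forall x, h < x -> ex_derive L x) by (apply analytic_ex_derive; exact Han).
  assert (Hcont : forall x, h < x -> continuity_pt L x).
  { intros x Hx. apply continuity_pt_filterlim. apply (ex_derive_continuous (K:=R_AbsRing) (V:=R_NormedModule)). auto. }
  assert (Heq : finf = Linf).
  { destruct Hinf as [Hi1 Hi2]. destruct Hfinf as [Hf1 Hf2].
    apply Rle_antisym.
    - destruct (Rle_dec finf Linf) as [?|Hn]; auto.
      destruct (Hi2 (finf - Linf)) as (k & Hk & Hk2); [lra|].
      assert (sqrt h < sqrt k) by (apply sqrt_lt_1; lra).
      specialize (Hf1 (sqrt k) H).
      rewrite <- Rsqr_pow2, Rsqr_sqrt in Hf1; lra.
    - destruct (Rle_dec Linf finf) as [?|Hn]; auto.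
      destruct (Hf2 (Linf - finf)) as (k & Hk & Hk2); [lra|].
      specialize (Hi1 (k^2) (sq_gt h k Hh Hk)). lra. }
  subst finf.
  destruct Hlim as [(M & K & HMK) _].
  set (K' := Rmax K (eps^2) + 1).
  assert (HK1 : K < K') by (unfold K'; pose proof (Rmax_l K (eps^2)); lra).
  assert (HK2 : eps^2 < K') by (unfold K'; pose proof (Rmax_r K (eps^2)); lra).
  assert (He2 : h < eps^2) by (apply sq_gt; auto).
  destruct (continuity_ab_maj L (eps^2) K') as (Mx & HMx & _).
  { lra. }
  { intros c Hc. apply Hcont. lra. }
  set (B := L Mx). set (M' := Rmax M 0).
  assert (HM'0 : 0 <= M') by apply Rmax_r.
  assert (Hbound : forall x, eps^2 <= x -> L x <= B + M' * x).
  { intros x Hx. destruct (Rle_dec x K') as [Hle|Hgt].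
    - assert (L x <= B) by (apply HMx; lra). nra.
    - destruct (MVT_gen L K' x (Derive L)) as (c & Hc & Hmvt).
      + intros y Hy. rewrite Rmin_left in Hy by lra. rewrite Rmax_right in Hy by lra.
        apply Derive_correct, Hex. lra.
      + intros y Hy. rewrite Rmin_left in Hy by lra. rewrite Rmax_right in Hy by lra.
        apply Hcont. lra.
      + rewrite Rmin_left in Hc by lra. rewrite Rmax_right in Hc by lra.
        assert (Derive L c <= M) by (apply HMK; lra).
        assert (M <= M') by apply Rmax_l.
        assert (L K' <= B) by (apply HMx; lra).
        nra. }
  set (C := Rabs (B - Linf) + b).
  assert (HC : 0 < C) by (unfold C; pose proof (Rabs_pos (B - Linf)); lra).
  assert (Hep : 0 < eps^2) by lra.
  assert (HD : 0 < C + M' * eps^2) by nra.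
  exists (4 * a * eps^2 / (C + M' * eps^2)).
  split.
  { apply Rdiv_lt_0_compat; nra. }
  intros k Hk.
  assert (Hkh : sqrt h < k) by lra.
  assert (Hk0 : 0 < k) by lra.
  set (x := k^2).
  assert (Hx : eps^2 <= x) by (unfold x; nra).
  assert (Hxh : h < x) by (apply sq_gt; auto).
  rewrite (deriv_sq L k (Hex _ Hxh)). fold x.
  set (u := L x - Linf).
  assert (Hu0 : 0 <= u) by (unfold u; pose proof (proj1 Hinf x Hxh); lra).
  assert (Hbu : b + u <= C + M' * x).
  { unfold u, C. pose proof (Hbound x Hx). pose proof (Rle_abs (B - Linf)). lra. }
  set (mu := 4 * a * eps ^ 2 / (C + M' * eps ^ 2)).
  assert (Hmu0 : 0 < mu) by (apply Rdiv_lt_0_compat; nra).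
  assert (Hmu1 : mu * (b + u) <= 4 * a * x).
  { apply Rle_trans with (mu * (C + M' * x)).
    - apply Rmult_le_compat_l; lra.
    - unfold mu. unfold Rdiv. rewrite Rmult_assoc, (Rmult_comm (/ _)), <- Rmult_assoc.
      apply (Rmult_le_reg_r (C + M' * eps^2)); auto.
      rewrite Rmult_assoc, Rinv_l by lra. assert (4*a*(eps^2*C) <= 4*a*(x*C)) by (apply Rmult_le_compat_l; [lra|apply Rmult_le_compat_r; lra]). lra. }
  set (q := a * u / (b + u)).
  assert (Hq : mu * u <= (2 * k) ^ 2 * q).
  { unfold q. replace ((2*k)^2) with (4 * x) by (unfold x; ring).
    unfold Rdiv. apply (Rmult_le_reg_r (b + u)); [lra|].
    replace (4 * x * (a * u * / (b + u)) * (b + u)) with (4 * x * a * u)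
      by (field; lra).
    nra. }
  specialize (HPL x Hxh). fold u q in HPL.
  rewrite Rabs_mult, (Rabs_pos_eq (2*k)) by lra.
  apply Rle_ge.
  apply Rle_trans with (sqrt ((2*k)^2 * q)).
  - apply sqrt_le_1_alt. exact Hq.
  - rewrite sqrt_mult_alt by nra. rewrite sqrt_pow2 by lra.
    apply Rmult_le_compat_l; lra.
Qed.
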